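(* For all $m\ge h\ge 1$, over the bidirected $(m,h)$-CCN the secrecy rate $h$ is achievable against a $1$-edge passive adversary that observes all values sent on any single directed edge of its choice.
   Context: Network model: a graph with unit-capacity edges; each use of an edge carries one symbol of a finite field $\mathbb{F}$ (taken sufficiently large), and entropies are measured in units of $\log|\mathbb{F}|$. A single source $S$ holds a message $\mathcal{W}$ to be multicast to a set of receivers. Each node may use its own private randomness; nodes share no prior common randomness and no side channel. An $N$-round protocol: in each round every (directed) edge is used at most once. Decodability: every receiver recovers $\mathcal{W}$ with zero error. Secrecy: $H(\mathcal{W}\mid \mathcal{V}_{\mathcal{A}})=H(\mathcal{W})$, where $\mathcal{V}_{\mathcal{A}}$ is the adversary's view, and must hold for every choice of the tapped edge. The secrecy rate is $H(\mathcal{W})/N$. Directed $(m,h)$-CCN ($m\ge h$): nodes $S$, $S_1,\dots,S_h$, $A_1,\dots,A_m$, $B_1,\dots,B_m$, and $\binom{m}{h}$ receivers, one per $h$-subset of $\{B_1,\dots,B_m\}$; directed edges $S\to S_i$ ($1\le i\le h$), $S_i\to A_i$ ($1\le i\le h$), $S_i\to A_j$ for all $1\le i\le h$, $h<j\le m$, $A_j\to B_j$, and $B_j\to R$ whenever $B_j$ is in the $h$-subset of receiver $R$. The bidirected $(m,h)$-CCN is obtained by adding, for every directed edge $u\to v$ of the directed CCN, an additional edge $v\to u$. *)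

(* Defs.v *)
From HB Require Import structures.
From mathcomp Require Import all_boot all_algebra.
From Stdlib Require Import Reals.

Set Implicit Arguments.
Unset Strict Implicit.
Unset Printing Implicit Defensive.

(* The (m,h)-combination network (CCN).  Indices are 0-based:               *)
(*   S_i (i < h), A_j, B_j (j < m), one receiver per h-subset of {0..m-1}.   *)

Definition ccn_recv (m h : nat) := {X : {set 'I_m} | #|X| == h}.

Definition ccn_node (m h : nat) :=
  ((((unit + 'I_h) + 'I_m) + 'I_m) + ccn_recv m h)%type.
HB.instance Definition _ m h := Finite.on (ccn_node m h).

Definition nS  (m h : nat) : ccn_node m h := inl (inl (inl (inl tt))).
Definition nSi (m h : nat) (i : 'I_h) : ccn_node m h := inl (inl (inl (inr i))).
Definition nA  (m h : nat) (j : 'I_m) : ccn_node m h := inl (inl (inr j)).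
Definition nB  (m h : nat) (j : 'I_m) : ccn_node m h := inl (inr j).
Definition nR  (m h : nat) (X : ccn_recv m h) : ccn_node m h := inr X.

Definition is_recv (m h : nat) (v : ccn_node m h) : bool :=
  if v is inr _ then true else false.

(* Directed edges of the directed (m,h)-CCN:
   S -> S_i ; S_i -> A_i ; S_i -> A_j (j >= h) ; A_j -> B_j ;
   B_j -> R_X whenever j \in X. *)
Definition ccn_dir (m h : nat) (u v : ccn_node m h) : bool :=
  match u, v with
  | inl (inl (inl (inl _))), inl (inl (inl (inr _))) => true
  | inl (inl (inl (inr i))), inl (inl (inr j)) =>
      (nat_of_ord j == nat_of_ord i) || (h <= j)
  | inl (inl (inr j)), inl (inr j') => j == j'
  | inl (inr j), inr X => j \in val X
  | _, _ => false
  end.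

Definition ccn_bi (m h : nat) (u v : ccn_node m h) : bool :=
  ccn_dir u v || ccn_dir v u.

(* Finite probability and Shannon entropy (in nats; divide by ln |F| to get *)
(* units of log |F|).                                                        *)

Section Entropy.
Local Open Scope R_scope.

Definition prob_of (Sg : finType) (P : Sg -> R) (A : eqType) (X : Sg -> A)
    (a : A) : R :=
  \big[Rplus/0]_(o : Sg) (if X o == a then P o else 0).

Definition entropy (Sg : finType) (P : Sg -> R) (A : eqType) (X : Sg -> A) : R :=
  - \big[Rplus/0]_(a <- undup [seq X o | o <- enum Sg])
        (prob_of P X a * ln (prob_of P X a)).

Definition cond_entropy (Sg : finType) (P : Sg -> R) (A B : eqType)
    (X : Sg -> A) (Y : Sg -> B) : R :=
  entropy P (fun o => (X o, Y o)) - entropy P Y.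

End Entropy.

(* A protocol over field F on node set V with source s:
   - message W of (finite) type msg_t with distribution pW;
   - every node v has private randomness in rnd_t with distribution pRnd v
     (independent across nodes and of W: no common randomness);
   - rounds = N; in round r the edges of sched r are used, in that order
     (each at most once, checked in [valid_protocol]);
   - the k-th transmission (over all rounds, in order) on edge (u,v) carries
     enc k (message if u = s) (randomness of u) (symbols u received so far);
   - receiver r outputs dec r (its randomness) (all symbols it received). *)
Record protocol (F : finFieldType) (V : finType) : Type := Protocol {
  msg_t : finType;
  pW : msg_t -> R;
  rnd_t : finType;
  pRnd : V -> rnd_t -> R;
  rounds : nat;
  sched : 'I_rounds -> seq (V * V);
  enc : nat -> option msg_t -> rnd_t -> seq F -> F;
  dec : V -> rnd_t -> seq F -> msg_t
}.
Arguments msg_t {F V} p.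
Arguments pW {F V} p _.
Arguments rnd_t {F V} p.
Arguments pRnd {F V} p _ _.
Arguments rounds {F V} p.
Arguments sched {F V} p _.
Arguments enc {F V} p _ _ _ _.
Arguments dec {F V} p _ _ _.

Section Protocol.
Variables (F : finFieldType) (V : finType) (s : V) (P : protocol F V).

Definition transmissions : seq (V * V) :=
  flatten [seq sched P r | r <- enum 'I_(rounds P)].

Definition received (u : V) (tr : seq (V * V)) (vals : seq F) : seq F :=
  [seq x.2 | x <- zip tr vals & x.1.2 == u].

Definition outcome := (msg_t P * {ffun V -> rnd_t P})%type.

Definition outcome_prob (o : outcome) : R :=
  Rmult (pW P o.1) (\big[Rmult/R1]_(v : V) pRnd P v (o.2 v)).

Definition run (o : outcome) : seq F :=
  foldl (fun vals e =>
           rcons vals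
             (enc P (size vals) (if e.1 == s then Some o.1 else None)
                  (o.2 e.1)
                  (received e.1 (take (size vals) transmissions) vals)))
        [::] transmissions.

Definition edge_view (e : V * V) (o : outcome) : seq F :=
  [seq x.2 | x <- zip transmissions (run o) & x.1 == e].

Definition message (o : outcome) : msg_t P := o.1.

Definition is_distribution (T : finType) (p : T -> R) : Prop :=
  (forall t, Rle R0 (p t)) /\ \big[Rplus/R0]_(t : T) p t = R1.

Definition valid_protocol (E : rel V) (receivers : pred V) : Prop :=
  [/\ is_distribution (pW P),
      (forall v, is_distribution (pRnd P v)),
      (forall r, uniq (sched P r) /\ all (fun e => E e.1 e.2) (sched P r)),
      (forall r, receivers r -> forall o : outcome, Rlt R0 (outcome_prob o) ->
          dec P r (o.2 r) (received r transmissions (run o)) = o.1)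
    &
      (forall u v, E u v ->
          cond_entropy outcome_prob message (edge_view (u, v))
          = entropy outcome_prob message)].

Definition secrecy_rate : R :=
  Rdiv (entropy outcome_prob message) (Rmult (INR (rounds P)) (ln (INR #|F|))).

End Protocol.

Definition secrecy_rate_achievable (F : finFieldType) (V : finType) (E : rel V)
    (s : V) (receivers : pred V) (r : R) : Prop :=
  exists P : protocol F V,
    [/\ valid_protocol s P E receivers, (0 < rounds P)%N & secrecy_rate P = r].

(* Main.v *)
Require Import Defs.
From HB Require Import structures.
From mathcomp Require Import all_boot all_algebra zify.
From Stdlib Require Import Reals Lra Lia.
Set Implicit Arguments. Unset Strict Implicit. Unset Printing Implicit Defensive.


Local Open Scope R_scope.

Lemma RplusA' : associative Rplus. Proof. move=> *; lra. Qed.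
Lemma RplusC' : commutative Rplus. Proof. move=> *; lra. Qed.
Lemma Rplus0l' : left_id 0 Rplus. Proof. move=> *; lra. Qed.
Lemma RmultA' : associative Rmult. Proof. move=> *; ring. Qed.
Lemma RmultC' : commutative Rmult. Proof. move=> *; ring. Qed.
Lemma Rmult1l' : left_id 1 Rmult. Proof. move=> *; ring. Qed.
Lemma Rmult0l' : left_zero 0 Rmult. Proof. move=> *; ring. Qed.
Lemma Rmult0r' : right_zero 0 Rmult. Proof. move=> *; ring. Qed.
Lemma RmultDl' : left_distributive Rmult Rplus. Proof. move=> *; ring. Qed.
Lemma RmultDr' : right_distributive Rmult Rplus. Proof. move=> *; ring. Qed.

HB.instance Definition _ := Monoid.isComLaw.Build R 0 Rplus RplusA' RplusC' Rplus0l'.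
HB.instance Definition _ := Monoid.isComLaw.Build R 1 Rmult RmultA' RmultC' Rmult1l'.
HB.instance Definition _ := Monoid.isMulLaw.Build R 0 Rmult Rmult0l' Rmult0r'.
HB.instance Definition _ := Monoid.isAddLaw.Build R Rmult Rplus RmultDl' RmultDr'.

Lemma sumR_ge0 (I : Type) (r : seq I) (f : I -> R) :
  (forall i, 0 <= f i) -> 0 <= \big[Rplus/0]_(i <- r) f i.
Proof.
move=> H; elim: r => [|x r IH]; first by rewrite big_nil; lra.
rewrite big_cons; have := H x; lra.
Qed.

Lemma sumR_eq0 (I : Type) (r : seq I) (f : I -> R) :
  (forall i, f i = 0) -> \big[Rplus/0]_(i <- r) f i = 0.
Proof. by move=> H; rewrite big1 // => i _; rewrite H. Qed.

Section Ent.
Variables (Sg : finType) (P : Sg -> R) (A B : eqType) (W : Sg -> A) (Y : Sg -> B).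
Hypothesis Pnn : forall o, 0 <= P o.

Lemma prob_ge0 (C : eqType) (X : Sg -> C) c : 0 <= prob_of P X c.
Proof. rewrite /prob_of; apply: sumR_ge0 => o; case: ifP => _ //; lra. Qed.

Lemma prob_tot (C : eqType) (X : Sg -> C) :
  \big[Rplus/0]_(c <- undup [seq X o | o <- enum Sg]) prob_of P X c
  = \big[Rplus/0]_(o : Sg) P o.
Proof.
rewrite /prob_of exchange_big /=; apply: eq_bigr => o _.
have Ho : X o \in undup [seq X o | o <- enum Sg] by rewrite mem_undup map_f ?mem_enum.
rewrite (bigD1_seq (X o)) ?undup_uniq //= eqxx big1 /=; first lra.
by move=> c /negbTE; rewrite eq_sym => ->.
Qed.

Lemma prob_out (C : eqType) (X : Sg -> C) c :
  c \notin undup [seq X o | o <- enum Sg] -> prob_of P X c = 0.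
Proof.
move=> Hc; rewrite /prob_of; apply: big1 => o _; case: eqP => // E.
by case/negP: Hc; rewrite -E mem_undup map_f ?mem_enum.
Qed.

Definition phi (x : R) := x * ln x.

Lemma phi_mul a b : 0 <= a -> 0 <= b -> phi (a * b) = b * phi a + a * phi b.
Proof.
rewrite /phi => Ha Hb.
case: (Req_dec a 0) => [->|Ha0]; first by rewrite Rmult_0_l; ring.
case: (Req_dec b 0) => [->|Hb0]; first by ring.
rewrite ln_mult; [ring | lra | lra].
Qed.

Lemma sum_subseq (C : eqType) (s t : seq C) (f : C -> R) :
  uniq s -> uniq t -> {subset s <= t} -> (forall x, x \in t -> x \notin s -> f x = 0) ->
  \big[Rplus/0]_(x <- s) f x = \big[Rplus/0]_(x <- t) f x.
Proof.
move=> us ut sst H.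
rewrite [RHS](bigID (fun x => x \in s)) /=.
have -> : \big[Rplus/0]_(i <- t | i \notin s) f i = 0.
  by apply: big1_seq => x /andP[xs xt]; apply: H.
rewrite Rplus_0_r -(big_filter t); apply: perm_big.
apply: uniq_perm; [exact: us | exact: filter_uniq | ].
by move=> x; rewrite mem_filter; apply/idP/andP => [xs|[]//]; split=> //; apply: sst.
Qed.

Hypothesis Ptot : \big[Rplus/0]_(o : Sg) P o = 1.
Hypothesis indep : forall a b,
  prob_of P (fun o => (W o, Y o)) (a, b) = prob_of P W a * prob_of P Y b.

Lemma indep_cond : cond_entropy P W Y = entropy P W.
Proof.
rewrite /cond_entropy /entropy.
set IW := undup [seq W o | o <- enum Sg].
set IY := undup [seq Y o | o <- enum Sg].
set IWY := undup [seq (W o, Y o) | o <- enum Sg].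
have E1 : \big[Rplus/0]_(p <- IWY) (prob_of P (fun o => (W o, Y o)) p *
               ln (prob_of P (fun o => (W o, Y o)) p))
        = \big[Rplus/0]_(p <- [seq (a, b) | a <- IW, b <- IY])
              phi (prob_of P (fun o => (W o, Y o)) p).
  apply: sum_subseq.
  - exact: undup_uniq.
  - apply: allpairs_uniq; try exact: undup_uniq.
    by move=> [a b] [a' b'] _ _ /= [-> ->].
  - move=> [a b]; rewrite mem_undup => /mapP[o oin [-> ->]].
    by apply: allpairs_f; rewrite mem_undup map_f.
  - by move=> p _ /prob_out ->; rewrite /phi Rmult_0_l.
rewrite E1 big_allpairs.
have E2 : \big[Rplus/0]_(a <- IW) \big[Rplus/0]_(b <- IY)
            phi (prob_of P (fun o => (W o, Y o)) (a, b))
   = \big[Rplus/0]_(a <- IW) phi (prob_of P W a) +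
     \big[Rplus/0]_(b <- IY) phi (prob_of P Y b).
  have Hin : forall a, \big[Rplus/0]_(b <- IY) phi (prob_of P (fun o => (W o, Y o)) (a, b))
       = phi (prob_of P W a) + prob_of P W a * \big[Rplus/0]_(b <- IY) phi (prob_of P Y b).
    move=> a.
    rewrite (eq_bigr (fun b => prob_of P Y b * phi (prob_of P W a) + prob_of P W a * phi (prob_of P Y b))); last first.
      by move=> b _; rewrite indep; apply: phi_mul; apply: prob_ge0.
    rewrite big_split /= -big_distrl -big_distrr /= /IY prob_tot Ptot; ring.
  rewrite (eq_bigr _ (fun a _ => Hin a)) big_split /= -big_distrl /= /IW prob_tot Ptot; ring.
rewrite E2 /phi; ring.
Qed.

End Ent.

Lemma iter_Rplus n x : iter n (Rplus x) 0 = INR n * x.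
Proof. elim: n => [|n IH]; first by rewrite /=; ring. change (x + iter n (Rplus x) 0 = INR n.+1 * x). rewrite IH S_INR; ring. Qed.

Lemma sumR_const (I : finType) x : \big[Rplus/0]_(i : I) x = INR #|I| * x.
Proof. by rewrite big_const iter_Rplus. Qed.

Section Unif.
Variables (M Rf : finType) (c : R) (P : (M * Rf)%type -> R).
Hypothesis Pc : forall o, P o = c.
Hypothesis c_ge0 : 0 <= c.
Hypothesis c_tot : c * (INR #|M| * INR #|Rf|) = 1.

Lemma sum_pair (f : (M * Rf)%type -> R) :
  \big[Rplus/0]_(o : M * Rf) f o = \big[Rplus/0]_(w : M) \big[Rplus/0]_(r : Rf) f (w, r).
Proof. by rewrite pair_bigA; apply: eq_bigr => [[]]. Qed.

Lemma unif_tot : \big[Rplus/0]_(o : M * Rf) P o = 1.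
Proof.
rewrite (eq_bigr (fun _ => c)) ?sumR_const; last by move=> *; rewrite Pc.
by rewrite card_prod mult_INR -c_tot; ring.
Qed.

Lemma unif_fst w : prob_of P (fun o => o.1) w = INR #|Rf| * c.
Proof.
rewrite /prob_of sum_pair /= (bigD1 w) //= [X in Rplus _ X]big1; last first.
  by move=> w' /negbTE Hw; apply: big1 => r _; rewrite Hw.
rewrite eqxx (eq_bigr (fun _ => c)) ?sumR_const; last by move=> *; rewrite Pc.
by rewrite Rplus_0_r.
Qed.

Variables (B : eqType) (Y : (M * Rf)%type -> B).
Definition Gw w y := \big[Rplus/0]_(r : Rf) (if Y (w, r) == y then c else 0).
Hypothesis Ginv : forall w w' y, Gw w y = Gw w' y.

Lemma unif_indep w y :
  prob_of P (fun o => (o.1, Y o)) (w, y) = prob_of P (fun o => o.1) w * prob_of P Y y.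
Proof.
have J : prob_of P (fun o => (o.1, Y o)) (w, y) = Gw w y.
  rewrite /prob_of sum_pair /= (bigD1 w) //= [X in Rplus _ X]big1; last first.
    move=> w' /negbTE Hw; apply: big1 => r _.
    by rewrite xpair_eqE Hw.
  rewrite Rplus_0_r /Gw; apply: eq_bigr => r _; rewrite xpair_eqE eqxx /= Pc //.
have K : prob_of P Y y = INR #|M| * Gw w y.
  rewrite /prob_of sum_pair /= -sumR_const; apply: eq_bigr => w' _.
  rewrite (Ginv w w' y) /Gw; apply: eq_bigr => r _; by rewrite Pc.
rewrite J K unif_fst.
have -> : INR #|Rf| * c * (INR #|M| * Gw w y) = Gw w y * (c * (INR #|M| * INR #|Rf|)) by ring.
by rewrite c_tot Rmult_1_r.
Qed.

Lemma unif_secrecy :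
  cond_entropy P (fun o => o.1) Y = entropy P (fun o => o.1).
Proof.
apply: indep_cond.
- by move=> o; rewrite Pc.
- exact: unif_tot.
- exact: unif_indep.
Qed.

Hypothesis r0 : Rf.

Lemma unif_entropy : entropy P (fun o => o.1) = ln (INR #|M|).
Proof.
rewrite /entropy; set L := undup _.
have Hp : perm_eq L (enum M).
  apply: uniq_perm; rewrite ?undup_uniq ?enum_uniq // => w.
  rewrite mem_undup mem_enum; apply/mapP; exists (w, r0) => //; by rewrite mem_enum.
rewrite (perm_big _ Hp) /= (eq_bigr (fun _ => phi (INR #|Rf| * c))); last first.
  by move=> w _; rewrite unif_fst.
rewrite big_enum /= sumR_const.
have HM : INR #|M| <> 0.
  by move=> H; move: c_tot; rewrite H Rmult_0_l Rmult_0_r; lra.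
have HMp : 0 < INR #|M| by have := pos_INR #|M|; lra.
have Hx : INR #|Rf| * c = / INR #|M|.
  apply: (Rmult_eq_reg_l (INR #|M|)) => //; rewrite Rinv_r // -c_tot; ring.
rewrite Hx /phi ln_Rinv //.
have Hk : forall x y, x <> 0 -> y = ln x -> - (x * (/ x * - y)) = ln x.
  by move=> x y Hx0 ->; field.
exact: Hk.
Qed.
End Unif.

Local Close Scope R_scope.
Import GRing.Theory.
Local Open Scope ring_scope.

Section Code.
Variables (h : nat) (F : finFieldType).

Definition alpha (k : nat) : F := nth 0 (enum F) k.
Definition cwp (w : {ffun 'I_h -> F}) : {poly F} :=
  \poly_(i < h) (if insub i is Some j then w j else 0).
Definition cc (k : nat) (w : {ffun 'I_h -> F}) : F := (cwp w).[alpha k].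

Lemma alpha_inj (S : seq nat) : uniq S -> all (fun k => k < #|F|)%nat S -> uniq (map alpha S).
Proof.
move=> uS aS; rewrite map_inj_in_uniq // => x y xS yS.
have xl : (x < size (enum F))%nat by rewrite -cardE; apply: (allP aS).
have yl : (y < size (enum F))%nat by rewrite -cardE; apply: (allP aS).
by rewrite /alpha => E; apply/eqP; rewrite -(nth_uniq 0 xl yl (enum_uniq F)) E.
Qed.

Lemma cc_inj (S : seq nat) w w' : uniq S -> all (fun k => k < #|F|)%nat S -> (h <= size S)%nat ->
  (forall k, k \in S -> cc k w = cc k w') -> w = w'.
Proof.
move=> uS aS hS E.
have P0 : cwp w - cwp w' = 0.
  apply: (@roots_geq_poly_eq0 _ _ (map alpha S)).
  - apply/allP => x /mapP[k kS ->]; rewrite /root hornerD hornerN.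
    by rewrite -/(cc k w) -/(cc k w') E // subrr.
  - exact: alpha_inj.
  - rewrite size_map (leq_trans _ hS) // (leq_trans (size_polyD _ _)) //.
    by rewrite size_polyN geq_max !size_poly.
apply/ffunP => j.
have := congr1 (fun p : {poly F} => p`_j) P0.
rewrite coefB !coef_poly ltn_ord valK coef0 => /eqP; by rewrite subr_eq0 => /eqP.
Qed.

End Code.

Local Close Scope ring_scope.
Local Open Scope ring_scope.

Section Proto.
Variables (m h : nat) (F : finFieldType).
Hypothesis h_le_m : (h <= m)%nat.
Hypothesis m_le_F : (m <= #|F|)%nat.

Local Notation V := (ccn_node m h).
Definition M := {ffun 'I_h -> F}.
Definition Rnd := {ffun V -> F}.

Definition lvl (v : V) : nat :=
  match v with
  | inl (inl (inl (inl _))) => 0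
  | inl (inl (inl (inr _))) => 1
  | inl (inl (inr _)) => 2
  | inl (inr _) => 3
  | inr _ => 4
  end%nat.

Lemma dir_lvl (u v : V) : ccn_dir u v -> lvl v = (lvl u).+1.
Proof. by case: u => [[[[u|u]|u]|u]|u]; case: v => [[[[v|v]|v]|v]|v]. Qed.

Lemma dir_asym (u v : V) : ccn_dir u v -> ~~ ccn_dir v u.
Proof.
move=> H; apply/negP => H'; have := dir_lvl H; have := dir_lvl H'.
by move=> ->; lia.
Qed.

Definition leE (e e' : V * V) := (lvl e.1 <= lvl e'.1)%nat.

Definition fwd : seq (V * V) :=
  locked (sort leE [seq e <- enum (@predT (V * V)%type) | ccn_dir e.1 e.2]).
Definition swap (e : V * V) := (e.2, e.1).
Definition keys := map swap fwd.
Definition tr := keys ++ fwd.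

Lemma mem_fwd e : (e \in fwd) = ccn_dir e.1 e.2.
Proof. by rewrite /fwd -lock mem_sort mem_filter mem_enum andbT. Qed.

Lemma uniq_fwd : uniq fwd.
Proof. by rewrite /fwd -lock sort_uniq filter_uniq // enum_uniq. Qed.

Lemma mem_keys e : (e \in keys) = ccn_dir e.2 e.1.
Proof.
apply/mapP/idP => [[x xf ->]|H]; first by rewrite /= -mem_fwd.
by exists (swap e); [rewrite mem_fwd | case: e {H}].
Qed.

Lemma fwd_keys e : e \in fwd -> e \notin keys.
Proof. by rewrite mem_fwd mem_keys => /dir_asym. Qed.

Lemma uniq_tr : uniq tr.
Proof.
rewrite cat_uniq uniq_fwd andbT map_inj_uniq ?uniq_fwd; last by move=> [? ?] [? ?] [-> ->].
apply/hasPn => e /fwd_keys //.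
Qed.


Definition dflt : V * V := (nS m h, nS m h).

Definition look (u : V) (recv : seq F) (e : V * V) : F :=
  nth 0 recv (count (fun x : V * V => x.2 == u) (take (index e tr) tr)).

Definition interp (a : V) (rnd : Rnd) (recv : seq F) : option M :=
  [pick w : M | [forall i : 'I_h, cc i w == look a recv (nSi m i, a) - rnd (nSi m i)]].

Definition Xcomp (e : V * V) (msg : option M) (rnd : Rnd) (recv : seq F) : F :=
  let a := e.1 in
  match a with
  | inl (inl (inl (inl _))) =>
      match e.2 with
      | inl (inl (inl (inr i))) => if msg is Some w then cc i w else 0
      | _ => 0
      end
  | inl (inl (inl (inr i))) => look a recv (nS m h, a) - rnd (nS m h)
  | inl (inl (inr j)) =>
      match (insub (nat_of_ord j) : option 'I_h) with
      | Some i => look a recv (nSi m i, a) - rnd (nSi m i)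
      | None => if interp a rnd recv is Some w then cc j w else 0
      end
  | inl (inr j) => look a recv (nA h j, a) - rnd (nA h j)
  | inr _ => 0
  end.

Definition enc (k : nat) (msg : option M) (rnd : Rnd) (recv : seq F) : F :=
  let e := nth dflt tr k in
  if (k < size keys)%nat then rnd e.2
  else Xcomp e msg rnd recv + look e.1 recv (e.2, e.1).

Definition w0 : M := [ffun => 0].

Definition dec (r : V) (rnd : Rnd) (recv : seq F) : M :=
  match r with
  | inr X => odflt w0 [pick w : M | [forall j : 'I_m,
                (j \in val X) ==> (cc j w == look r recv (nB h j, r) - rnd (nB h j))]]
  | _ => w0
  end.

Definition PR : protocol F V :=
  @Protocol F V M (fun _ => Rinv (INR #|M|)) Rnd (fun _ _ => Rinv (INR #|Rnd|)) 1
    (fun _ => tr) enc dec.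

Definition cidx (e : V * V) : nat :=
  match e.1 with
  | inl (inl (inl (inl _))) => if e.2 is inl (inl (inl (inr i))) then nat_of_ord i else 0
  | inl (inl (inl (inr i))) => nat_of_ord i
  | inl (inl (inr j)) => nat_of_ord j
  | inl (inr j) => nat_of_ord j
  | inr _ => 0
  end%nat.

Definition valE (o : outcome PR) (e : V * V) : F :=
  if e \in fwd then cc (cidx e) o.1 + o.2 e.2 e.1 else o.2 e.1 e.2.


Lemma zip_map_filter (t : seq (V * V)) (f : V * V -> F) (p : pred (V * V)) :
  [seq x.2 | x <- zip t (map f t) & p x.1] = [seq f x | x <- t & p x].
Proof. by elim: t => //= x t IH; case: (p x) => /=; rewrite IH. Qed.

Lemma nth_filter_count (t : seq (V * V)) (f : V * V -> F) (p : pred (V * V)) i :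
  (i < size t)%nat -> p (nth dflt t i) ->
  nth 0 [seq f x | x <- t & p x] (count p (take i t)) = f (nth dflt t i).
Proof.
elim: t i => [|x t IH] [|i] //= Hi Hp.
- by rewrite Hp.
- by case Hx: (p x) => /=; rewrite ?add0n ?add1n IH.
Qed.

Lemma trans_PR : transmissions PR = tr.
Proof.
rewrite /transmissions /=.
have : size (enum 'I_1) = 1%nat by rewrite size_enum_ord.
by case: (enum 'I_1) => [|x [|y s]] //= _; rewrite cats0.
Qed.

Lemma look_ok o k (x : V * V) u :
  (k <= size tr)%nat -> x \in tr -> (index x tr < k)%nat -> x.2 = u ->
  look u (received u (take k tr) (take k (map (valE o) tr))) x = valE o x.
Proof.
move=> Hk xtr Hi Hu.
rewrite /look /received -map_take (zip_map_filter _ _ (fun y : V * V => y.2 == u)).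
have Hi' : (index x tr < size (take k tr))%nat by rewrite size_take; case: ifP => _ //; rewrite index_mem.
have -> : take (index x tr) tr = take (index x tr) (take k tr) by rewrite take_takel // ltnW.
rewrite nth_filter_count // nth_take ?nth_index //.
by rewrite Hu.
Qed.

Lemma Xcomp_ok (o : outcome PR) (a b : V) (recv : seq F) :
  ccn_dir a b ->
  (forall x, x \in fwd -> x.2 = a -> (lvl x.1 < lvl a)%nat ->
     look a recv x = cc (cidx x) o.1 + o.2 a x.1) ->
  Xcomp (a, b) (if a == nS m h then Some o.1 else None) (o.2 a) recv = cc (cidx (a, b)) o.1.
Proof.
case: a => [[[[u|i]|j]|j]|X]; case: b => [[[[u'|i']|j']|j']|X'] //= Hd Hl.
- rewrite /Xcomp /= (Hl (nS m h, nSi m i)) ?mem_fwd //=.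
  by rewrite addrK.
- move/eqP: Hd => Hd; subst j'; rewrite /Xcomp /=.
  case: insubP => [i Hj Hi|Hj].
  + rewrite (Hl (nSi m i, nA h j)) ?mem_fwd //= ?addrK ?Hi //.
    * by congr cc; exact: Hi.
    * by rewrite /= -Hi eqxx.
  + rewrite /interp; case: (@pickP M) => [w Hw|Hn]; last first.
      have := Hn o.1; move/negbT/negP; case; apply/forallP => i.
      rewrite (Hl (nSi m i, nA h j)) ?mem_fwd //= ?addrK //.
      by rewrite leqNgt Hj orbT.
    have -> : w = o.1; last by [].
    apply: (@cc_inj h F (iota 0 h)).
    * exact: iota_uniq.
    * by apply/allP => x; rewrite mem_iota /= add0n => Hx; apply: leq_trans m_le_F; apply: leq_trans h_le_m.
    * by rewrite size_iota.
    * move=> x; rewrite mem_iota add0n /= => Hx.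
      have := forallP Hw (Ordinal Hx); move/eqP => ->.
      rewrite (Hl (nSi m (Ordinal Hx), nA h j)) ?mem_fwd //= ?addrK //.
      by rewrite leqNgt Hj orbT.
- by rewrite /Xcomp /= (Hl (nA h j, nB h j)) ?mem_fwd //= ?addrK.
Qed.

Lemma ltn_aux a b k : (a <= k)%nat -> (b < k - a)%nat -> (a + b < k)%nat.
Proof. lia. Qed.

Lemma fwd_order (x e : V * V) : x \in fwd -> e \in fwd -> (lvl x.1 < lvl e.1)%nat ->
  (index x fwd < index e fwd)%nat.
Proof.
move=> xf ef Hl; rewrite ltnNge; apply/negP => Hi.
have Hs : sorted leE fwd.
  by rewrite /fwd -lock; apply: sort_sorted => u v; rewrite /leE; apply: leq_total.
have := sorted_leq_index (fun y x z : V * V => @leq_trans (lvl y.1) (lvl x.1) (lvl z.1)) (fun a : V * V => leqnn (lvl a.1)) Hs e x ef xf Hi.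
by rewrite /leE leqNgt Hl.
Qed.

Lemma enc_ok (o : outcome PR) k : (k < size tr)%nat ->
  enc k (if (nth dflt tr k).1 == nS m h then Some o.1 else None) (o.2 (nth dflt tr k).1)
      (received (nth dflt tr k).1 (take k tr) (take k (map (valE o) tr)))
  = valE o (nth dflt tr k).
Proof.
move=> Hk; rewrite /enc.
set e := nth dflt tr k.
case: ifP => Hkk.
- have ek : e \in keys by rewrite /e /tr nth_cat Hkk mem_nth.
  have enf : e \notin fwd by apply/negP => /fwd_keys; rewrite ek.
  by rewrite /valE (negbTE enf).
have Hk2 : (k - size keys < size fwd)%nat by move: Hk; rewrite size_cat; lia.
have ef : e \in fwd by rewrite /e /tr nth_cat Hkk mem_nth.
have ie : index e fwd = (k - size keys)%nat.
  by rewrite /e /tr nth_cat Hkk index_uniq // uniq_fwd.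
set recv := received _ _ _.
have Hkey : look e.1 recv (e.2, e.1) = o.2 e.2 e.1.
  have xk : (e.2, e.1) \in keys by rewrite mem_keys /= -mem_fwd.
  rewrite /recv look_ok //.
  - by rewrite /valE ifF //; apply/negP => /fwd_keys; rewrite xk.
  - exact: ltnW.
  - by rewrite mem_cat xk.
  - rewrite index_cat xk.
    have := index_mem (e.2, e.1) keys; rewrite xk; move: Hkk => /negbT; rewrite -leqNgt. by move=> H1 H2; exact: leq_trans H2 H1.
have Hl : forall x, x \in fwd -> x.2 = e.1 -> (lvl x.1 < lvl e.1)%nat ->
     look e.1 recv x = cc (cidx x) o.1 + o.2 e.1 x.1.
  move=> x xf x2 xl; rewrite /recv look_ok //.
  - by rewrite /valE xf x2.
  - exact: ltnW.
  - by rewrite mem_cat xf orbT.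
  - rewrite index_cat ifF; last by apply/negP => xk; move: (fwd_keys xf); rewrite xk.
    have := fwd_order xf ef xl; rewrite ie; move: Hkk => /negbT; rewrite -leqNgt => H1 H2; exact: ltn_aux H1 H2.
rewrite Hkey /valE ef; congr (_ + _).
clear Hkey; move: Hl (ef); rewrite mem_fwd; clearbody recv; clear ie Hk2 ef.
clearbody e; case: e => a b /= Hl Hd.
by rewrite Xcomp_ok.
Qed.

Lemma run_ok (o : outcome PR) : run (nS m h) o = map (valE o) tr.
Proof.
rewrite /run trans_PR.
set f := fun vals e => _.
suff H : forall k, (k <= size tr)%nat -> foldl f [::] (take k tr) = take k (map (valE o) tr).
  have := H (size tr) (leqnn _); rewrite take_size take_oversize; first by [].
  by rewrite size_map.
elim=> [|k IH] Hk; first by rewrite !take0.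
rewrite (take_nth dflt Hk) foldl_rcons IH; last exact: ltnW.
rewrite (take_nth 0); last by rewrite size_map.
rewrite {1}/f size_take size_map Hk (nth_map dflt); last exact: Hk.
congr rcons.
exact: (enc_ok o Hk).
Qed.

Lemma view_ok (o : outcome PR) (e : V * V) :
  edge_view (nS m h) e o = if e \in tr then [:: valE o e] else [::].
Proof.
rewrite /edge_view run_ok trans_PR (zip_map_filter _ _ (fun y => y == e)).
case: ifP => He.
- by rewrite (filter_pred1_uniq uniq_tr He).
- have -> : [seq x <- tr | x == e] = [::].
    apply/eqP; rewrite -size_eq0 size_filter; apply/eqP/count_memPn; by rewrite He.
  by [].
Qed.

Lemma dec_ok (o : outcome PR) (X : ccn_recv m h) :
  dec (nR X) (o.2 (nR X)) (received (nR X) tr (map (valE o) tr)) = o.1.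
Proof.
set recv := received _ _ _.
have Hl : forall j : 'I_m, j \in val X ->
    look (nR X) recv (nB h j, nR X) = cc j o.1 + o.2 (nR X) (nB h j).
  move=> j jX.
  have jf : (nB h j, nR X) \in fwd by rewrite mem_fwd.
  have E : recv = received (nR X) (take (size tr) tr) (take (size tr) (map (valE o) tr)).
    by rewrite take_size take_oversize // size_map.
  rewrite E look_ok.
  - by rewrite /valE jf.
  - exact: leqnn.
  - by rewrite mem_cat jf orbT.
  - by rewrite index_mem mem_cat jf orbT.
  - by [].
rewrite /dec /nR /=; case: (@pickP M) => [w Hw|Hn] /=; last first.
  have := Hn o.1; move/negbT/negP; case; apply/forallP => j; apply/implyP => jX.
  by rewrite Hl // addrK.
apply: (@cc_inj h F (map val (enum (val X)))).
- by rewrite map_inj_uniq ?enum_uniq //; apply: val_inj.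
- apply/allP => x /mapP[j _ ->]; exact: leq_trans (ltn_ord j) m_le_F.
- by rewrite size_map -cardE; case: X {recv Hl Hw} => X /= /eqP ->.
- move=> x /mapP[j jX ->]; rewrite mem_enum in jX.
  have := forallP Hw j; rewrite jX /= => /eqP ->.
  by rewrite Hl // addrK.
Qed.

End Proto.

Local Close Scope ring_scope.
Local Open Scope R_scope.

Lemma shift_sum (V : finType) (F : finFieldType) (a b : V) (d : F) (G : F -> R) :
  \big[Rplus/0]_(r : {ffun V -> {ffun V -> F}}) G (GRing.add d (r a b))
  = \big[Rplus/0]_(r : {ffun V -> {ffun V -> F}}) G (r a b).
Proof.
pose sh (d : F) (r : {ffun V -> {ffun V -> F}}) : {ffun V -> {ffun V -> F}} :=
  [ffun v => if v == a then [ffun u => if u == b then GRing.add d (r v u) else r v u] else r v].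
have K : forall d, cancel (sh d) (sh (GRing.opp d)).
  move=> d' r; apply/ffunP => v; rewrite !ffunE; case: eqP => // ->.
  apply/ffunP => u; rewrite !ffunE; case: eqP => // _.
  by rewrite GRing.addKr.
rewrite [RHS](reindex_inj (can_inj (K d))); apply: eq_bigr => r _.
by rewrite /sh !ffunE eqxx ffunE eqxx.
Qed.

Lemma iter_Rmult n x : iter n (Rmult x) 1 = x ^ n.
Proof. elim: n => [|n IH] //. change (x * iter n (Rmult x) 1 = x ^ n.+1). by rewrite IH. Qed.

Lemma INR_expn a n : INR (expn a n) = INR a ^ n.
Proof. elim: n => [|n IH]; first by rewrite expn0. by rewrite expnS mult_INR IH. Qed.

Lemma unif_dist (T : finType) (x : T) : is_distribution (fun _ : T => Rinv (INR #|T|)).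
Proof.
have H : (0 < #|T|)%nat by apply/card_gt0P; exists x.
have Hp : 0 < INR #|T| by apply: lt_0_INR; apply/ltP.
split.
- move=> _; apply: Rlt_le; exact: Rinv_0_lt_compat.
- by rewrite sumR_const Rinv_r //; lra.
Qed.

Section Cst.
Variables (m h : nat) (F : finFieldType).
Definition cst : R := Rinv (INR #|M h F|) * \big[Rmult/R1]_(v : ccn_node m h) Rinv (INR #|Rnd m h F|).

Lemma cst_P (o : outcome (PR m h F)) : outcome_prob o = cst.
Proof. by []. Qed.

Lemma card_pos (T : finType) (x : T) : 0 < INR #|T|.
Proof. have H : (0 < #|T|)%nat by apply/card_gt0P; exists x. by apply: lt_0_INR; apply/ltP. Qed.

Lemma cst_props : (0 <= cst) /\ (cst * (INR #|M h F| * INR #|{ffun ccn_node m h -> Rnd m h F}|) = 1).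
Proof.
have HM := card_pos (w0 h F).
have HR := card_pos ([ffun => @GRing.zero F] : Rnd m h F).
rewrite /cst big_const iter_Rmult [#|{ffun _ -> Rnd m h F}|]card_ffun INR_expn pow_inv.
have Hp : forall n, 0 < INR #|Rnd m h F| ^ n by move=> n; apply: pow_lt.
split.
- apply: Rmult_le_pos; apply: Rlt_le; apply: Rinv_0_lt_compat => //.
- have K : forall a b : R, 0 < a -> 0 < b -> / a * / b * (a * b) = 1.
    by move=> a b Ha Hb; field; lra.
  apply: K => //; apply: Hp.
Qed.
End Cst.

Local Close Scope R_scope.

Theorem lemma3 (m h : nat) (h_pos : (1 <= h)%N) (h_le_m : (h <= m)%N) :
  exists q0 : nat, forall F : finFieldType, (q0 <= #|F|)%N ->
    secrecy_rate_achievable F (@ccn_bi m h) (nS m h) (@is_recv m h) (INR h).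
Proof.
exists m.+2 => F HF.
have m_le_F : (m <= #|F|)%nat by apply: leq_trans HF; apply: leq_trans (leqnSn _) (leqnSn _).
exists (PR m h F); split.
- split.
  + exact: (unif_dist (w0 h F)).
  + move=> v; change (is_distribution (fun _ : Rnd m h F => Rinv (INR #|Rnd m h F|))).
    exact: (unif_dist ([ffun => @GRing.zero F] : {ffun ccn_node m h -> F})).
  + move=> r; split; first exact: (uniq_tr h_le_m m_le_F).
    apply/allP => e; rewrite mem_cat => /orP[ek|ef]; rewrite /ccn_bi.
    * by rewrite mem_keys in ek; rewrite ek orbT.
    * by rewrite mem_fwd in ef; rewrite ef.
  + case=> // X _ o _.
    rewrite trans_PR (run_ok h_le_m m_le_F); exact: (dec_ok m_le_F o X).
  + move=> u v _.
    have [c0 c1] := cst_props m h F.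
    apply: (unif_secrecy (c := cst m h F)) => //.
    move=> w w' y.
    suff E : forall ww : msg_t (PR m h F), Gw (cst m h F) (edge_view (nS m h) (u, v)) ww y =
      \big[Rplus/IZR Z0]_(r : {ffun ccn_node m h -> Rnd m h F})
         (if (if (u, v) \in tr m h then [:: if (u, v) \in fwd m h then r v u else r u v] else [::]) == y
          then cst m h F else IZR Z0).
      by rewrite !E.
    move=> ww; rewrite /Gw.
    under eq_bigr => r _ do rewrite (view_ok h_le_m m_le_F) /valE.
    case: ((u, v) \in tr m h); last by [].
    case: ((u, v) \in fwd m h); last by [].
    pose G := fun z : F => if [:: z] == y then cst m h F else IZR Z0.
    rewrite (eq_bigr (fun r : {ffun ccn_node m h -> Rnd m h F} => G (GRing.add (cc (cidx (u, v)) ww) (r v u)))); last by [].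
    have S := @shift_sum _ F v u (cc (cidx (u,v)) ww) G. rewrite /G in S *. exact: S.
- by [].
- have [c0 c1] := cst_props m h F.
  have HE : entropy (@outcome_prob F _ (PR m h F)) (@message F _ (PR m h F)) = ln (INR #|M h F|).
    exact: (unif_entropy (c := cst m h F) (@cst_P m h F) c1
              ([ffun => [ffun => @GRing.zero F]] : {ffun ccn_node m h -> Rnd m h F})).
  rewrite /secrecy_rate HE /M card_ffun card_ord INR_expn.
  have Hq : (1 < INR #|F|)%R.
    have -> : 1%R = INR 1 by [].
    apply: lt_INR; apply/ltP; apply: leq_ltn_trans HF; by [].
  have Hl : (0 < ln (INR #|F|))%R by rewrite -ln_1; apply: ln_increasing; lra.
  rewrite ln_pow; last by apply: (Rlt_trans _ 1); [lra | exact: Hq].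
  change (INR 1) with R1.
  have K : forall a b : R, (0 < b -> a * b / (R1 * b) = a)%R.
    by move=> a b Hb; field; lra.
  exact: K.
Qed.
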